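(* Let $f$ be a real valued function defined on a subset $D$ of $\mathbb{R}$ and let $x\in D$. The set of sequential cord derivatives of $f$ at $x$ is a closed subset of $\overline{\mathbb{R}}$.
   Context: $\overline{\mathbb{R}}=\mathbb{R}\cup\{\pm\infty\}$. $L\in\overline{\mathbb{R}}$ is a sequential cord derivative of $f$ at $x$ if there are sequences $h_n>0$, $k_n>0$ with $h_n\to0$, $k_n\to0$, $x+h_n\in D$, $x-k_n\in D$ for all $n$, and $\frac{f(x+h_n)-f(x-k_n)}{h_n+k_n}\to L$ as $n\to\infty$. A set $S\subseteq\overline{\mathbb{R}}$ is closed if every $L\in\overline{\mathbb{R}}$ for which there is a sequence of real numbers $L_n\in S\cap\mathbb{R}$ with $L_n\to L$ belongs to $S$. *)

(* Defs.v *)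
From Stdlib Require Import Reals.
From Coquelicot Require Export Coquelicot.
Open Scope R_scope.

Definition seq_cord_deriv (D : R -> Prop) (f : R -> R) (x : R) (L : Rbar) : Prop :=
  exists h k : nat -> R,
    (forall n, 0 < h n) /\ (forall n, 0 < k n) /\
    is_lim_seq h 0 /\ is_lim_seq k 0 /\
    (forall n, D (x + h n)) /\ (forall n, D (x - k n)) /\
    is_lim_seq (fun n => (f (x + h n) - f (x - k n)) / (h n + k n)) L.

Definition closed_Rbar (S : Rbar -> Prop) : Prop :=
  forall (L : Rbar) (Ln : nat -> R),
    (forall n, S (Finite (Ln n))) -> is_lim_seq Ln L -> S L.

(* Main.v *)
Require Import Defs.
From Stdlib Require Import Reals.
From Coquelicot Require Import Coquelicot.
From Stdlib Require Import Lra Lia IndefiniteDescription.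
Open Scope R_scope.

Lemma eps_pos (n : nat) : 0 < / (INR n + 1).
Proof. apply Rinv_0_lt_compat. pose proof (pos_INR n). lra. Qed.

Lemma eps_lim : is_lim_seq (fun n => / (INR n + 1)) 0.
Proof.
  assert (H : is_lim_seq (fun n => INR n + 1) p_infty).
  { eapply is_lim_seq_plus. apply is_lim_seq_INR. apply is_lim_seq_const. simpl. constructor. }
  pose proof (is_lim_seq_inv _ _ H) as H2. apply H2. discriminate.
Qed.

Lemma fin_near (u : nat -> R) (l : R) (e : posreal) :
  is_lim_seq u l -> exists N, forall n, (N <= n)%nat -> Rabs (u n - l) < e.
Proof.
  intros H. apply is_lim_seq_spec in H. apply (H e).
Qed.

Theorem theorem3p4 (D : R -> Prop) (f : R -> R) (x : R) (Hx : D x) :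
  closed_Rbar (seq_cord_deriv D f x).
Proof.
  intros L Ln HS HL.
  assert (Hex : forall n, exists p : R * R,
    0 < fst p < / (INR n + 1) /\ 0 < snd p < / (INR n + 1) /\
    D (x + fst p) /\ D (x - snd p) /\
    Rabs ((f (x + fst p) - f (x - snd p)) / (fst p + snd p) - Ln n) < / (INR n + 1)).
  { intros n. destruct (HS n) as (h & k & Hh & Hk & Lh & Lk & Dh & Dk & Lq).
    set (e := mkposreal _ (eps_pos n)).
    destruct (fin_near _ _ e Lh) as [N1 H1].
    destruct (fin_near _ _ e Lk) as [N2 H2].
    destruct (fin_near _ _ e Lq) as [N3 H3].
    set (m := (N1 + N2 + N3)%nat).
    exists (h m, k m). simpl.
    specialize (H1 m ltac:(unfold m; lia)). specialize (H2 m ltac:(unfold m; lia)).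
    specialize (H3 m ltac:(unfold m; lia)).
    simpl in H1, H2, H3. rewrite Rminus_0_r in H1, H2.
    specialize (Hh m). specialize (Hk m).
    rewrite Rabs_pos_eq in H1 by lra. rewrite Rabs_pos_eq in H2 by lra.
    repeat split; auto; lra. }
  apply functional_choice in Hex. destruct Hex as [g Hg].
  exists (fun n => fst (g n)), (fun n => snd (g n)).
  repeat split.
  - intros n. apply (Hg n).
  - intros n. apply (Hg n).
  - apply is_lim_seq_le_le with (u := fun _ => 0) (w := fun n => / (INR n + 1)).
    + intros n. destruct (Hg n) as [[? ?] _]. lra.
    + apply is_lim_seq_const.
    + apply eps_lim.
  - apply is_lim_seq_le_le with (u := fun _ => 0) (w := fun n => / (INR n + 1)).
    + intros n. destruct (Hg n) as [_ [[? ?] _]]. lra.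
    + apply is_lim_seq_const.
    + apply eps_lim.
  - intros n. apply (Hg n).
  - intros n. apply (Hg n).
  - set (q := fun n => (f (x + fst (g n)) - f (x - snd (g n))) / (fst (g n) + snd (g n))).
    change (is_lim_seq q L).
    apply is_lim_seq_ext with (u := fun n => Ln n + (q n - Ln n)).
    { intros n. ring. }
    apply is_lim_seq_plus with (l1 := L) (l2 := Finite 0). apply HL.
    2: { destruct L; try constructor. unfold is_Rbar_plus, Rbar_plus'. rewrite Rplus_0_r; reflexivity. }
    apply is_lim_seq_abs_0.
    apply is_lim_seq_le_le with (u := fun _ => 0) (w := fun n => / (INR n + 1)).
    + intros n. split. apply Rabs_pos. destruct (Hg n) as [_ [_ [_ [_ H]]]]. unfold q. lra.
    + apply is_lim_seq_const.
    + apply eps_lim.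
Qed.
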